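(* During every execution of the algorithm, at least one active candidate exists.
   Context: A broadcast network is modeled as a connected graph G(V,E) with n nodes. In the fragment-level leader election algorithm, nodes are partitioned into fragments, each consisting of an active candidate and its supporting nodes; id(F) = (size, candidate identity) ordered lexicographically (by size, then by identity); external edges are directed from the larger-id to the smaller-id fragment. Initially each node is an active candidate of a size-1 fragment in state wait. A fragment with an outgoing edge is in wait; one whose external edges are all incoming enters work, counts its size new_size, and compares with its maximal neighbor F': if new_size > X · size(F') (X > 1) it remains active, updates its size, makes all external edges outgoing and returns to wait; otherwise its candidate becomes inactive and the fragment joins F'. A fragment with no external edges is in state leader. A candidate is active while its fragment is in state work, wait or leader. *)

(* Defs.v *)
From HB Require Import structures.
From mathcomp Require Import all_boot all_order all_algebra.
Set Implicit Arguments. Unset Strict Implicit. Unset Printing Implicit Defensive.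
Import Order.TTheory GRing.Theory Num.Theory.
Local Open Scope ring_scope.

Inductive cstate := Wait | Work | Leader | Inactive.

Section Algo.
Variable n : nat.
(* nodes are 'I_n; the identity of a node is its value as a nat *)
Notation V := 'I_n.

(* A configuration:
   - cand v : the candidate of the fragment containing v (fragment membership),
   - sz c   : the size recorded by candidate c (size(F) for F with candidate c),
   - st c   : the state of candidate c (state of its fragment, or Inactive). *)
Record config := Config {
  cand : V -> V;
  sz : V -> nat;
  st : V -> cstate }.

Definition init_config : config :=
  Config (fun v => v) (fun _ => 1%N) (fun _ => Wait).

Definition id_lt (s1 : nat) (c1 : V) (s2 : nat) (c2 : V) : bool :=
  (s1 < s2)%N || ((s1 == s2) && (c1 < c2)%N).

Definition fragment (k : config) (c : V) : {set V} := [set v | cand k v == c].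

Definition ext_edge (e : rel V) (k : config) (c u w : V) : bool :=
  [&& e u w, cand k u == c & cand k w != c].

Definition neighbor (e : rel V) (k : config) (c c' : V) : Prop :=
  exists u w, ext_edge e k c u w /\ cand k w = c'.

(* an external edge (u,w) of F is incoming iff id(F) < id(F_w) *)
Definition all_incoming (e : rel V) (k : config) (c : V) : Prop :=
  forall u w, ext_edge e k c u w ->
    id_lt (sz k c) c (sz k (cand k w)) (cand k w).

Definition has_ext (e : rel V) (k : config) (c : V) : Prop :=
  exists u w, ext_edge e k c u w.

Definition max_neighbor (e : rel V) (k : config) (c c' : V) : Prop :=
  neighbor e k c c' /\
  forall c'', neighbor e k c c'' -> c'' != c' -> id_lt (sz k c'') c'' (sz k c') c'.

Definition upd {T : Type} (f : V -> T) (c : V) (x : T) : V -> T :=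
  fun v => if v == c then x else f v.

Variables (R : realFieldType) (X : R).

Inductive step (e : rel V) : config -> config -> Prop :=
  | StepToWork k c :
      st k c = Wait -> has_ext e k c -> all_incoming e k c ->
      step e k (Config (cand k) (sz k) (upd (st k) c Work))
  | StepToLeader k c :
      st k c = Wait -> ~ has_ext e k c ->
      step e k (Config (cand k) (sz k) (upd (st k) c Leader))
  | StepGrow k c c' :
      st k c = Work -> max_neighbor e k c c' ->
      X * (sz k c')%:R < (#|fragment k c|)%:R ->
      step e k (Config (cand k) (upd (sz k) c #|fragment k c|) (upd (st k) c Wait))
  | StepJoin k c c' :
      st k c = Work -> max_neighbor e k c c' ->
      ~ (X * (sz k c')%:R < (#|fragment k c|)%:R) ->
      step e k (Config (fun v => if cand k v == c then c' else cand k v)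
                       (sz k) (upd (st k) c Inactive)).

End Algo.

Definition active (n : nat) (k : config n) (c : 'I_n) : Prop :=
  st k c = Wait \/ st k c = Work \/ st k c = Leader.

Definition connected_graph (n : nat) (e : rel 'I_n) : Prop :=
  symmetric e /\ irreflexive e /\ forall u v, connect e u v.

(* Main.v *)
Require Import Defs.
From HB Require Import structures.
From mathcomp Require Import all_boot all_order all_algebra.
Import Order.TTheory GRing.Theory Num.Theory.
Local Open Scope ring_scope.

Definition inv_ok {n : nat} (k : config n) : Prop :=
  forall v, active k (cand k v).

Lemma upd_active {n : nat} (k : config n) (c : 'I_n) (s : cstate) x :
  (s = Wait \/ s = Work \/ s = Leader) -> active k x ->
  (upd (st k) c s x = Wait \/ upd (st k) c s x = Work \/ upd (st k) c s x = Leader).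
Proof. rewrite /upd; case: (x == c) => //. Qed.

Lemma step_inv {n : nat} {e : rel 'I_n} {R : realFieldType} {X : R} {k k'} :
  step X e k k' -> inv_ok k -> inv_ok k'.
Proof.
case=> {k k'} k c.
- move=> _ _ _ H v; apply: upd_active; [by right; left | exact: H].
- move=> _ _ H v; apply: upd_active; [by right; right | exact: H].
- move=> c' _ _ _ H v; apply: upd_active; [by left | exact: H].
- move=> c' _ [[u [w [Hext Hw]]] _] _ H v; rewrite /active /= /upd.
  move: Hext => /and3P [_ _ Hwc].
  case: (cand k v =P c) => Hv.
  + have Hc : (c' == c) = false by rewrite -Hw; exact/negbTE.
    rewrite Hc -Hw; exact: H.
  + have Hc : (cand k v == c) = false by apply/eqP.
    rewrite Hc; exact: H.
Qed.

Theorem lemma1 (n : nat) (e : rel 'I_n) (R : realFieldType) (X : R)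
  (execution : nat -> config n) (len : nat) :
  (0 < n)%N -> connected_graph e -> 1 < X ->
  execution 0%N = init_config n ->
  (forall i, (i < len)%N -> step X e (execution i) (execution i.+1)) ->
  forall i, (i <= len)%N -> exists c : 'I_n, active (execution i) c.
Proof.
move=> n0 _ _ H0 Hs.
have Hinv : forall i, (i <= len)%N -> inv_ok (execution i).
  elim=> [|i IH] Hi.
  - by rewrite H0 => v; left.
  - have Hst := Hs i Hi. apply: (step_inv Hst). apply: IH; exact: ltnW.
move=> i Hi; exists (cand (execution i) (Ordinal n0)); exact: Hinv.
Qed.
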